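(* Let $R$ be a $*$-ring. Then the following are equivalent: (1) $R$ is strongly $J$-$*$-clean. (2) $R$ is uniquely clean and $a-a^*\in J(R)$ for every $a\in R$. (3) $R$ is uniquely clean and $a+a^*\in J(R)$ for every $a\in R$.
   Context: All rings are associative with identity. A $*$-ring is a ring $R$ with an involution $*$, i.e. a map $a\mapsto a^*$ with $(a+b)^*=a^*+b^*$, $(ab)^*=b^*a^*$, $(a^* )^*=a$. $J(R)$ denotes the Jacobson radical of $R$. A projection is an element $e$ with $e^2=e=e^*$. $R$ is strongly $J$-$*$-clean if every $a\in R$ can be written $a=e+u$ with $e$ a projection, $u\in J(R)$ and $ae=ea$. $R$ is uniquely clean if every element of $R$ can be written uniquely as the sum of an idempotent and a unit. *)

(* Defs.v *)
From HB Require Import structures.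
From mathcomp Require Import all_boot all_algebra.
Set Implicit Arguments. Unset Strict Implicit. Unset Printing Implicit Defensive.
Import GRing.Theory.
Local Open Scope ring_scope.

Definition involution (R : pzRingType) (s : R -> R) : Prop :=
  [/\ forall a b, s (a + b) = s a + s b,
      forall a b, s (a * b) = s b * s a &
      forall a, s (s a) = a].

Definition left_ideal (R : pzRingType) (I : R -> Prop) : Prop :=
  [/\ I 0,
      forall x y, I x -> I y -> I (x + y),
      forall x, I x -> I (- x) &
      forall r x, I x -> I (r * x)].

Definition maximal_left_ideal (R : pzRingType) (I : R -> Prop) : Prop :=
  [/\ left_ideal I,
      exists x, ~ I x &
      forall K : R -> Prop, left_ideal K -> (forall x, I x -> K x) ->
        (forall x, K x) \/ (forall x, K x <-> I x)].

Definition in_jacobson (R : pzRingType) (x : R) : Prop :=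
  forall I : R -> Prop, maximal_left_ideal I -> I x.

Definition is_unit (R : pzRingType) (u : R) : Prop :=
  exists v, u * v = 1 /\ v * u = 1.

Definition idempotent (R : pzRingType) (e : R) : Prop := e * e = e.

Definition projection (R : pzRingType) (s : R -> R) (e : R) : Prop :=
  e * e = e /\ s e = e.

Definition strongly_J_star_clean (R : pzRingType) (s : R -> R) : Prop :=
  forall a : R, exists e u : R,
    [/\ projection s e, in_jacobson u, a = e + u & a * e = e * a].

(* every element is uniquely the sum of an idempotent and a unit;
   since u = a - e, uniqueness of the pair (e,u) is uniqueness of e *)
Definition uniquely_clean (R : pzRingType) : Prop :=
  forall a : R, exists! e : R, idempotent e /\ is_unit (a - e).

(* Main.v *)
Require Import Defs.
From mathcomp Require Import all_boot all_algebra.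
From mathcomp Require Import boolp classical_sets.
Local Open Scope ring_scope.
Import GRing.Theory.
Set Implicit Arguments. Unset Strict Implicit.

Section Z.
Variable R : pzRingType.

Lemma exists_max (L : R -> Prop) : left_ideal L -> ~ L 1 ->
  exists M, maximal_left_ideal M /\ (forall x, L x -> M x).
Proof.
move=> [L0 LD LN LM] L1.
pose P (A : set R) := [/\ ~ A 1, (forall x y, A x -> A y -> A (x+y)),
  (forall x, A x -> A (-x)), (forall r x, A x -> A (r*x)) &
  (forall x, A x -> forall l, L l -> A l)].
have [A [[A1 AD AN AM AL] Amax]] : exists A, P A /\ forall B, (A `<` B)%classic -> ~ P B.
  apply: Zorn_bigcup => F FP Ftot; split.
  - by case=> X FX X1; case: (FP X FX).
  - move=> x y [X FX Xx] [Y FY Yy].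
    case: (Ftot X Y FX FY) => XY.
      by exists Y => //; case: (FP Y FY) => _ D _ _ _; apply: D => //; apply: XY.
    by exists X => //; case: (FP X FX) => _ D _ _ _; apply: D => //; apply: XY.
  - by move=> x [X FX Xx]; exists X => //; case: (FP X FX) => _ _ N _ _; apply: N.
  - by move=> r x [X FX Xx]; exists X => //; case: (FP X FX) => _ _ _ M _; apply: M.
  - by move=> x [X FX Xx] l Ll; exists X => //; case: (FP X FX) => _ _ _ _ H; apply: H Xx l Ll.
have PL : P L by split.
have LA : forall l, L l -> A l.
  case: (pselect (exists x, A x)) => [[x Ax]|nA]; first exact: AL Ax.
  exfalso; apply: (Amax L) => //; split.
    by move=> x Ax; exfalso; apply: nA; exists x.
  by move=> LA; apply: nA; exists 0; apply: LA.
exists A; split => //; split.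
- by split => //; apply: LA.
- by exists 1.
- move=> K [K0 KD KN KM] AK.
  case: (pselect (K 1)) => [K1|nK1].
    by left => x; rewrite -(mulr1 x); apply: KM.
  right => x; split; last exact: AK.
  case: (pselect (K `<=` A)%classic) => [KA|nKA]; first exact: KA.
  exfalso; apply: (Amax K); first by split.
  by split => // y Ky l Ll; apply: AK; apply: LA.
Qed.

Definition Jc (x : R) := forall r : R, is_unit (1 - r * x).

Lemma unit1 : is_unit (1 : R).
Proof. by exists 1; rewrite mulr1. Qed.

Lemma unitM (u v : R) : is_unit u -> is_unit v -> is_unit (u * v).
Proof.
move=> [u' [h1 h2]] [v' [h3 h4]]; exists (v' * u'); split.
  by rewrite mulrA -(mulrA u) h3 mulr1 h1.
by rewrite mulrA -(mulrA v') h2 mulr1 h4.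
Qed.

Lemma unitN (u : R) : is_unit u -> is_unit (- u).
Proof. by move=> [u' [h1 h2]]; exists (- u'); rewrite !mulrNN. Qed.

Lemma J_closed_mul (x r : R) : in_jacobson x -> in_jacobson (r * x).
Proof. by move=> Jx I MI; case: (MI) => [[_ _ _ IM] _ _]; apply: IM; apply: Jx. Qed.

Lemma J_left_inv (y : R) : in_jacobson y -> exists u, u * (1 - y) = 1.
Proof.
move=> Jy; case: (pselect (exists u, u * (1 - y) = 1)) => // nu.
pose L z := exists c, z = c * (1 - y).
have [M [MI LM]] : exists M, maximal_left_ideal M /\ (forall x, L x -> M x).
  apply: exists_max.
    split; first by exists 0; rewrite mul0r.
    - by move=> a b [c ->] [d ->]; exists (c + d); rewrite mulrDl.
    - by move=> a [c ->]; exists (- c); rewrite mulNr.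
    - by move=> r a [c ->]; exists (r * c); rewrite mulrA.
  by move=> [c hc]; apply: nu; exists c.
have My : M y by apply: Jy.
case: MI => [[M0 MD MN MM] [x nMx] _].
have M1 : M 1.
  have -> : (1 : R) = y + (1 - y) by rewrite addrC subrK.
  by apply: MD => //; apply: LM; exists 1; rewrite mul1r.
by exfalso; apply: nMx; rewrite -(mulr1 x); apply: MM.
Qed.

Lemma J_unit (y : R) : in_jacobson y -> is_unit (1 - y).
Proof.
move=> Jy; have [u hu] := J_left_inv Jy.
have eu : 1 - (- u) * y = u.
  by rewrite mulNr opprK -{1}hu mulrBr mulr1 subrK.
have [w hw] := J_left_inv (J_closed_mul (- u) Jy).
rewrite eu in hw.
have ew : w = 1 - y by rewrite -[w]mulr1 -{1}hu mulrA hw mul1r.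
by exists u; split => //; rewrite -ew.
Qed.

Lemma J_Jc x : in_jacobson x -> Jc x.
Proof. by move=> Jx r; apply: J_unit; apply: J_closed_mul. Qed.

Lemma Jc_J x : Jc x -> in_jacobson x.
Proof.
move=> Jx I [[I0 ID IN IM] _ Imax].
pose K z := exists m c, I m /\ z = m + c * x.
have KL : left_ideal K.
  split; first by exists 0, 0; rewrite mul0r addr0.
  - move=> a b [m [c [Im ->]]] [m' [c' [Im' ->]]]; exists (m + m'), (c + c').
    by split; [apply: ID | rewrite mulrDl addrACA].
  - move=> a [m [c [Im ->]]]; exists (- m), (- c).
    by split; [apply: IN | rewrite opprD mulNr].
  - move=> r a [m [c [Im ->]]]; exists (r * m), (r * c).
    by split; [apply: IM | rewrite mulrDr mulrA].
have IK : forall z, I z -> K z by move=> z Iz; exists z, 0; rewrite mul0r addr0.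
case: (Imax K KL IK) => [Kall|Keq].
  have [m [c [Im e1]]] := Kall 1.
  have [v [_ hv]] := Jx c.
  have e2 : 1 - c * x = m by rewrite e1 addrK.
  rewrite e2 in hv.
  have I1 : I 1 by rewrite -hv; apply: IM.
  by rewrite -(mulr1 x); apply: IM.
by apply/Keq; exists 0, 1; rewrite add0r mul1r.
Qed.

Lemma JcE x : in_jacobson x <-> Jc x.
Proof. by split; [apply: J_Jc | apply: Jc_J]. Qed.

Lemma swap_unit (a b : R) : is_unit (1 - a * b) -> is_unit (1 - b * a).
Proof.
move=> [v [h1 h2]]; exists (1 + b * v * a); split.
  have abv : a * b * v = v - 1 by rewrite -h1 mulrBl mul1r opprB addrC subrK.
  have e : b * a * b * v * a = b * v * a - b * a.
    by rewrite -(mulrA b a) -(mulrA b) abv mulrBr mulr1 mulrBl.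
  rewrite mulrBl !mulrDr !mul1r mulr1 !mulrA e addrCA subrr addr0 addrK //.
have vab : v * a * b = v - 1 by rewrite -h2 mulrBr mulr1 opprB addrC subrK -mulrA.
have e : b * v * a * b * a = b * v * a - b * a.
  have : b * (v * a * b) * a = b * v * a - b * a by rewrite vab mulrBr mulr1 mulrBl.
  by rewrite !mulrA.
by rewrite mulrBr !mulrDl !mul1r mulr1 !mulrA e addrCA subrr addr0 addrK.
Qed.

Lemma Jc_mull (x r : R) : Jc x -> Jc (r * x).
Proof. by move=> Jx r'; rewrite mulrA; apply: Jx. Qed.

Lemma Jc_mulr (x t : R) : Jc x -> Jc (x * t).
Proof. by move=> Jx r; rewrite mulrA; apply: swap_unit; rewrite mulrA; apply: Jx. Qed.

Lemma Jc_add (x y : R) : Jc x -> Jc y -> Jc (x + y).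
Proof.
move=> Jx Jy r; have [v [h1 h2]] := Jx r.
have -> : 1 - r * (x + y) = (1 - r * x) * (1 - v * r * y).
  by rewrite mulrBr mulr1 !mulrA h1 mul1r mulrDr opprD addrA.
by apply: unitM; [apply: Jx | apply: Jy].
Qed.

Lemma Jc_opp (x : R) : Jc x -> Jc (- x).
Proof. by move=> Jx; rewrite -mulN1r; apply: Jc_mull. Qed.

Lemma Jc_sub (x y : R) : Jc x -> Jc y -> Jc (x - y).
Proof. by move=> Jx Jy; apply: Jc_add => //; apply: Jc_opp. Qed.

Lemma Jc0 : Jc 0.
Proof. by move=> r; rewrite mulr0 subr0; apply: unit1. Qed.

Lemma Jc_unit (x : R) : Jc x -> is_unit (1 - x).
Proof. by move=> Jx; have := Jx 1; rewrite mul1r. Qed.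

Lemma Jc_idem0 (k : R) : Jc k -> k * k = k -> k = 0.
Proof.
move=> Jk kk; have [v [h1 _]] := Jc_unit Jk.
have : k * (1 - k) = 0 by rewrite mulrBr mulr1 kk subrr.
by move=> h; rewrite -[k]mulr1 -h1 mulrA h mul0r.
Qed.


Lemma idem_l (e : R) : Defs.idempotent e -> e * (1 - e) = 0.
Proof. by move=> ee; rewrite mulrBr mulr1 ee subrr. Qed.

Lemma idem_r (e : R) : Defs.idempotent e -> (1 - e) * e = 0.
Proof. by move=> ee; rewrite mulrBl mul1r ee subrr. Qed.

Lemma idemC (e : R) : Defs.idempotent e -> Defs.idempotent (1 - e).
Proof. by move=> ee; rewrite /Defs.idempotent mulrBr mulr1 idem_r // subr0. Qed.

Lemma idemM (x y : R) : Defs.idempotent x -> Defs.idempotent y -> x * y = y * x ->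
  Defs.idempotent (x * y).
Proof.
move=> xx yy xy; rewrite /Defs.idempotent -mulrA (mulrA y) -xy.
by rewrite !mulrA xx -mulrA yy.
Qed.

Lemma central_of (e x : R) : e * x * (1 - e) = 0 -> (1 - e) * x * e = 0 ->
  e * x = x * e.
Proof.
rewrite mulrBr mulr1 mulrBl mul1r mulrBl => /eqP h1 /eqP h2.
rewrite subr_eq0 in h1; rewrite subr_eq0 in h2.
by rewrite (eqP h1) (eqP h2).
Qed.

Lemma idem_eq (e f : R) : Defs.idempotent e -> Defs.idempotent f -> e * f = f * e ->
  Jc (e - f) -> e = f.
Proof.
move=> ee ff ef J.
have h1 : e * (1 - f) = 0.
  apply: Jc_idem0.
    have -> : e * (1 - f) = e * (e - f) by rewrite !mulrBr mulr1 ee.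
    exact: Jc_mull.
  apply: idemM => //; first exact: idemC.
  by rewrite mulrBr mulrBl mulr1 mul1r ef.
have h2 : f * (1 - e) = 0.
  apply: Jc_idem0.
    have -> : f * (1 - e) = - (f * (e - f)) by rewrite !mulrBr mulr1 ff opprB.
    by apply: Jc_opp; exact: Jc_mull.
  apply: idemM => //; first exact: idemC.
  by rewrite mulrBr mulrBl mulr1 mul1r ef.
move: h1 h2; rewrite !mulrBr !mulr1 => /eqP h1 /eqP h2.
rewrite subr_eq0 in h1; rewrite subr_eq0 in h2.
by rewrite (eqP h1) ef -(eqP h2).
Qed.

Section S.
Variable s : R -> R.
Hypothesis hs : involution s.

Lemma sD a b : s (a + b) = s a + s b. Proof. by case: hs. Qed.
Lemma sM a b : s (a * b) = s b * s a. Proof. by case: hs. Qed.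
Lemma ss a : s (s a) = a. Proof. by case: hs. Qed.
Lemma s0 : s 0 = 0.
Proof. by apply: (addrI (s 0)); rewrite -sD !addr0. Qed.
Lemma sN a : s (- a) = - s a.
Proof. by apply: (addIr (s a)); rewrite -sD !addNr s0. Qed.
Lemma sB a b : s (a - b) = s a - s b.
Proof. by rewrite sD sN. Qed.
Lemma s1 : s 1 = 1.
Proof. by have := sM (s 1) 1; rewrite mulr1 ss mulr1. Qed.
Lemma unit_s u : is_unit u -> is_unit (s u).
Proof.
by move=> [v [h1 h2]]; exists (s v); rewrite -!sM h1 h2 s1.
Qed.
Lemma Jc_s x : Jc x -> Jc (s x).
Proof.
move=> Jx r.
have -> : 1 - r * s x = s (1 - x * s r) by rewrite sB s1 sM ss.
by apply: unit_s; apply: swap_unit; apply: Jx.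
Qed.

Lemma sc_proj (SC : strongly_J_star_clean s) (f : R) : Defs.idempotent f -> s f = f.
Proof.
move=> ff; have [p [j [[pp sp] /JcE Jj hf fp]]] := SC f.
have jE : f - p = j by rewrite hf addrC addKr.
have -> : f = p by apply: idem_eq => //; rewrite jE.
exact: sp.
Qed.

Lemma sc_central (SC : strongly_J_star_clean s) (e x : R) : Defs.idempotent e -> e * x = x * e.
Proof.
move=> ee; have se : s e = e by apply: sc_proj.
have s1e : s (1 - e) = 1 - e by rewrite sB s1 se.
apply: central_of.
- set n := e * x * (1 - e).
  have en : e * n = n by rewrite /n !mulrA ee.
  have ne : n * e = 0 by rewrite /n -mulrA idem_r // mulr0.
  have nn : n * n = 0 by rewrite {2}/n !mulrA ne !mul0r.
  have g : Defs.idempotent (e + n).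
    by rewrite /Defs.idempotent mulrDl !mulrDr ee en ne nn !addr0.
  have sn : s n = n.
    by apply: (addrI e); have := sc_proj SC g; rewrite sD se.
  have esn : e * s n = 0 by rewrite /n !sM s1e mulrA idem_l // mul0r.
  by rewrite -en -{1}sn esn.
- set n := (1 - e) * x * e.
  have ne : n * e = n by rewrite /n -mulrA ee.
  have en : e * n = 0 by rewrite /n !mulrA idem_l // !mul0r.
  have nn : n * n = 0 by rewrite {1}/n -!mulrA en !mulr0.
  have g : Defs.idempotent (e + n).
    by rewrite /Defs.idempotent mulrDl !mulrDr ee en ne nn !addr0.
  have sn : s n = n.
    by apply: (addrI e); have := sc_proj SC g; rewrite sD se.
  have sne : s n * e = 0 by rewrite /n !sM s1e se !mulrA -mulrA idem_r // mulr0.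
  by rewrite -ne -{1}sn sne.
Qed.

Lemma uniq_aux (p f j v : R) : Defs.idempotent p -> Defs.idempotent f ->
  f * p = p * f -> Jc j -> is_unit v -> v = p + j - f -> 1 - p = f.
Proof.
move=> pp ff fp Jj [v' [h1 _]] hv.
have c0 : f * p = 0.
  apply: Jc_idem0; last by apply: idemM.
  have cv : f * p * v = f * p * j.
    rewrite hv mulrBr mulrDr -(mulrA f p p) pp -(mulrA f p f) -fp mulrA ff.
    by rewrite addrAC subrr add0r.
  by rewrite -[f * p]mulr1 -h1 mulrA cv; apply: Jc_mulr; apply: Jc_mull.
have pf' : (1 - p) * f = f * (1 - p) by rewrite mulrBl mulrBr mul1r mulr1 fp.
have c1 : (1 - f) * (1 - p) = 0.
  have cm : (1 - f) * (1 - p) = (1 - p) * (1 - f).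
    rewrite !mulrBl !mulrBr !mul1r !mulr1 fp !opprB !addrA.
    by rewrite (addrAC 1 (-p)) (addrAC 1 (-f)) [RHS]addrAC.
  apply: Jc_idem0; last by apply: idemM; [apply: idemC|apply: idemC|].
  have cv : (1 - f) * (1 - p) * v = (1 - f) * (1 - p) * j.
    rewrite hv mulrBr mulrDr -(mulrA (1 - f) (1 - p) p) idem_r // mulr0 add0r.
    rewrite -(mulrA (1 - f) (1 - p) f) pf' mulrA idem_r // mul0r subr0 //.
  have -> : (1 - f) * (1 - p) = (1 - f) * (1 - p) * v * v' by rewrite -mulrA h1 mulr1.
  by rewrite cv; apply: Jc_mulr; apply: Jc_mull.
move: c1; rewrite mulrBl mul1r mulrBr mulr1 c0 subr0 => /eqP.
by rewrite subr_eq0 => /eqP.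
Qed.

Lemma sc_uc (SC : strongly_J_star_clean s) : uniquely_clean R.
Proof.
move=> a; have [p [j [[pp sp] /JcE Jj ha ap]]] := SC a.
set w := p - (1 - p).
have ww : w * w = 1.
  rewrite /w mulrBl !mulrBr !mulr1 pp idem_r // subrr !subr0 sub0r opprK.
  by rewrite addrC subrK.
exists (1 - p); split.
  split; first exact: idemC.
  have -> : a - (1 - p) = w * (1 - (- w) * j).
    by rewrite mulNr opprK mulrDr mulr1 mulrA ww mul1r ha /w addrAC.
  by apply: unitM; [exists w | apply: Jj].
move=> f [ff uf].
apply: (uniq_aux pp ff _ Jj uf); last by rewrite ha.
exact: (sc_central SC).
Qed.

Lemma sc_anti (SC : strongly_J_star_clean s) (a : R) : Jc (a - s a).
Proof.
have [p [j [[pp sp] /JcE Jj ha ap]]] := SC a.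
rewrite ha sD sp opprD addrACA subrr add0r.
by apply: Jc_sub => //; apply: Jc_s.
Qed.
End S.

Lemma bool_two (H : forall a : R, exists e, Defs.idempotent e /\ Jc (a - e)) :
  Jc (1 + 1).
Proof.
have key : forall a : R, Jc (a - a * a).
  move=> a; have [e [ee Jj]] := H a.
  have ha : a = e + (a - e) by rewrite addrC subrK.
  move: Jj ha; move: (a - e) => j Jj ->.
  rewrite mulrDl !mulrDr ee -(addrA e (e * j)) opprD addrACA subrr add0r.
  apply: Jc_sub => //; apply: Jc_add; first exact: Jc_mull.
  by apply: Jc_add; [apply: Jc_mulr | apply: Jc_mull].
have := key (-1); rewrite mulrNN mulr1 -opprD => /Jc_opp.
by rewrite opprK.
Qed.

Section UC.
Hypothesis UC : uniquely_clean R.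

Lemma uc_nil (e n : R) : Defs.idempotent e -> n * n = 0 ->
  Defs.idempotent (e + n) -> n = 0.
Proof.
move=> ee nn gg.
have [f [_ uq]] := UC (e + n + 1).
have u1 : is_unit (1 + n).
  exists (1 - n); split.
    by rewrite mulrDl mul1r mulrBr mulr1 nn subr0 subrK.
  by rewrite mulrBl mul1r mulrDr mulr1 nn addr0 addrK.
have h1 : f = e + n by apply: uq; split => //; rewrite addrC addKr; exact: unit1.
have h2 : f = e by apply: uq; split => //; rewrite addrAC (addrAC e) subrr add0r addrC.
by apply: (addrI e); rewrite addr0 -h1 h2.
Qed.

Lemma uc_central (e x : R) : Defs.idempotent e -> e * x = x * e.
Proof.
move=> ee; apply: central_of.
- set n := e * x * (1 - e).
  have en : e * n = n by rewrite /n !mulrA ee.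
  have ne : n * e = 0 by rewrite /n -mulrA idem_r // mulr0.
  have nn : n * n = 0 by rewrite {2}/n !mulrA ne !mul0r.
  apply: (uc_nil ee nn).
  by rewrite /Defs.idempotent mulrDl !mulrDr ee en ne nn !addr0.
- set n := (1 - e) * x * e.
  have ne : n * e = n by rewrite /n -mulrA ee.
  have en : e * n = 0 by rewrite /n !mulrA idem_l // !mul0r.
  have nn : n * n = 0 by rewrite {1}/n -!mulrA en !mulr0.
  apply: (uc_nil ee nn).
  by rewrite /Defs.idempotent mulrDl !mulrDr ee en ne nn !addr0.
Qed.

Lemma uc_dedekind (Y Z : R) : Z * Y = 1 -> is_unit Y.
Proof.
move=> zy; exists Z; split => //.
set m := Y * Z.
have mm : Defs.idempotent m by rewrite /Defs.idempotent /m mulrA -(mulrA Y) zy mulr1.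
have zm : Z * m = Z by rewrite /m mulrA zy mul1r.
by rewrite -[m]mulr1 -zy mulrA (uc_central Z mm) zm.
Qed.

Lemma corner_mul (k a b : R) : Defs.idempotent k -> (forall x, k * x = x * k) ->
  ((1 - k) + k * a) * ((1 - k) + k * b) = (1 - k) + k * (a * b).
Proof.
move=> kk kc.
have kc' : forall x, (1 - k) * x = x * (1 - k).
  by move=> x; rewrite mulrBl mulrBr mul1r mulr1 kc.
rewrite mulrDl [(1 - k) * _]mulrDr [k * a * _]mulrDr (idemC kk) (mulrA (1 - k) k b) idem_r // mul0r addr0.
rewrite -(mulrA k a (1 - k)) -kc' (mulrA k (1 - k) a) idem_l // mul0r add0r.
by rewrite -(mulrA k a) (mulrA a k) -kc -(mulrA k a b) mulrA kk.
Qed.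

Lemma uc_corner (k y z1 z2 : R) : Defs.idempotent k ->
  z1 * y * k = k -> z2 * (y - 1) * k = k -> k = 0.
Proof.
move=> kk h1 h2.
have kc : forall x, k * x = x * k by move=> x; apply: uc_central.
have U : forall z yy, z * yy * k = k -> is_unit ((1 - k) + k * yy).
  move=> z yy h; apply: (@uc_dedekind _ ((1 - k) + k * z)).
  by rewrite corner_mul // kc h subrK.
have [f [_ uq]] := UC ((1 - k) + k * y).
have e1 : f = 0 by apply: uq; split; [rewrite /Defs.idempotent mulr0 | rewrite subr0; exact: U h1].
have e2 : f = k.
  apply: uq; split => //.
  have -> : 1 - k + k * y - k = (1 - k) + k * (y - 1) by rewrite mulrBr mulr1 addrA.
  exact: U h2.
by rewrite -e2 e1.
Qed.

Lemma corner_inv (r x y t g w w' k : R) : t = 1 - r * x -> t - g = w ->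
  w' * w = 1 -> g * k = k -> x * k = y * k -> - (w' * r) * y * k = k.
Proof.
move=> ht tg hw gk xk.
have wk : w * k = - (r * y * k).
  rewrite -tg mulrBl gk ht mulrBl mul1r -(mulrA r x k) xk mulrA addrAC subrr add0r //.
rewrite -[RHS]mul1r -hw -(mulrA w' w k) wk mulrN !mulrA !mulNr //.
Qed.

Lemma uc_lift (a : R) : exists e, Defs.idempotent e /\ Jc (a - e).
Proof.
have [f [[ff [u' [uu1 uu2]]] _]] := UC a.
set u := a - f in uu1 uu2.
have ha : a = f + u by rewrite /u addrC subrK.
clearbody u.
exists (1 - f); split; first exact: idemC.
move=> r; set x := a - (1 - f).
have [g [[gg [w' [hw1 hw2]]] _]] := UC (1 - r * x).
have fc : forall z, f * z = z * f by move=> z; apply: uc_central.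
have gc : forall z, g * z = z * g by move=> z; apply: uc_central.
have k1 : g * f = 0.
  apply: (@uc_corner _ (1 + u) (- (w' * r)) u'); first by apply: idemM => //.
    apply: (corner_inv (erefl _) (erefl _) hw2); first by rewrite mulrA gg.
    have xf : x * f = (1 + u) * f.
      by rewrite /x ha mulrBl (mulrDl f u) ff idem_r // subr0 mulrDl mul1r.
    by rewrite (gc f) mulrA xf -mulrA.
  by rewrite addrC addKr uu2 mul1r.
have k2 : g * (1 - f) = 0.
  apply: (@uc_corner _ (1 - u) (w' * r) (- u')); first by apply: idemM; [exact: gg | exact: idemC | exact: gc].
    have -> : w' * r * (1 - u) = - (w' * r) * (u - 1) by rewrite mulNr -mulrN opprB.
    apply: (corner_inv (erefl _) (erefl _) hw2); first by rewrite mulrA gg.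
    have xf : x * (1 - f) = (u - 1) * (1 - f).
      rewrite /x ha mulrBl mulrDl idem_l // add0r (idemC ff) mulrBl mul1r //.
    by rewrite (gc (1 - f)) mulrA xf -mulrA.
  by rewrite addrAC subrr add0r mulrNN uu2 mul1r.
have g0 : g = 0.
  by rewrite -[g]mulr1 -(subrK f 1) mulrDr k2 k1 add0r.
by move: hw1 hw2; rewrite g0 subr0 => hw1 hw2; exists w'.
Qed.
End UC.
End Z.

Unset Implicit Arguments.
Theorem lemma3p1 (R : pzRingType) (s : R -> R) (hs : involution s) :
  (strongly_J_star_clean s <->
     (uniquely_clean R /\ forall a : R, in_jacobson (a - s a))) /\
  (strongly_J_star_clean s <->
     (uniquely_clean R /\ forall a : R, in_jacobson (a + s a))).
Proof.
have P12 : strongly_J_star_clean s <->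
   (uniquely_clean R /\ forall a : R, in_jacobson (a - s a)).
  split.
    move=> SC; split; first exact: sc_uc hs SC.
    by move=> a; apply/JcE; exact: sc_anti hs SC a.
  move=> [UC H] a; have [e [ee Je]] := uc_lift UC a.
  exists e, (a - e); split.
  - split; first exact: ee.
    apply: idem_eq.
    + by rewrite /Defs.idempotent -(sM hs) ee.
    + exact: ee.
    + by apply: (uc_central UC); rewrite /Defs.idempotent -(sM hs) ee.
    + by have := Jc_opp (proj1 (JcE _) (H e)); rewrite opprB.
  - exact/JcE.
  - by rewrite addrC subrK.
  - by rewrite (uc_central UC a ee).
have C23 : (uniquely_clean R /\ forall a : R, in_jacobson (a - s a)) <->
   (uniquely_clean R /\ forall a : R, in_jacobson (a + s a)).
  split => -[UC H]; split => // a; apply/JcE;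
    have two := bool_two (uc_lift UC); have := proj1 (JcE _) (H a) => Ja.
    have -> : a + s a = (a - s a) + (1 + 1) * s a by rewrite mulrDl mul1r addrA subrK.
    by apply: Jc_add => //; apply: Jc_mulr.
  have -> : a - s a = (a + s a) - (1 + 1) * s a by rewrite mulrDl mul1r opprD addrA addrK.
  by apply: Jc_sub => //; apply: Jc_mulr.
split => //; split => [SC | C3]; first by apply/C23/P12.
by apply/P12/C23.
Qed.
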